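(* Let $n\geq1$ and $p,q>1$ satisfy \[ \frac{p+1}{pq-1}>\frac{n-1}{2},\qquad \frac{n-1}{2}(q-1)<1 . \] Let $\varepsilon>0$ and $C>0$, and suppose $H\in C^1(\mathbb{R}_+)$ and $G\in C^2(\mathbb{R}_+)$ satisfy, for all $t\geq0$, \[ H'(t)\geq C\langle t\rangle^{-\frac{n-1}{2}(q-1)}G(t)^q,\quad H(t)\geq0,\quad H'(t)\geq0, \] \[ G''(t)+2G'(t)\geq C\langle t\rangle^{-\frac{n-1}{2}(p-1)}H(t)^p,\quad G(t)\geq C\varepsilon,\quad G'(t)\geq0 . \] Then for any $M>0$ there exist constants $A>0$ and $T>0$ (possibly depending on $\varepsilon$) such that $G(t)\geq A\langle t\rangle^M$ for all $t\geq T$.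
   Context: $\langle t\rangle:=\sqrt{1+t^2}$, $\mathbb{R}_+=[0,\infty)$. *)

(* Defs.v *)
From Stdlib Require Import Reals Lra.
From Coquelicot Require Import Coquelicot.
Open Scope R_scope.

Definition jb (t : R) : R := sqrt (1 + t ^ 2).

(* real power x^a for x >= 0 (with 0^a = 0, a > 0 in all uses) *)
Definition rpow (x a : R) : R := if Rlt_dec 0 x then Rpower x a else 0.

Definition cont_Rplus (f : R -> R) : Prop :=
  (forall t, 0 < t -> continuous f t) /\
  filterlim f (at_right 0) (locally (f 0)).

(* Main.v *)
Require Import Defs.
From Stdlib Require Import Reals.
From Coquelicot Require Import Coquelicot.
Open Scope R_scope.
From Stdlib Require Import Lra Lia.

Lemma nondecr (f df : R -> R) (a b : R) : a <= b ->
  (forall s, a <= s <= b -> is_derive f s (df s)) ->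
  (forall s, a <= s <= b -> 0 <= df s) -> f a <= f b.
Proof.
intros hab hd hp.
destruct (MVT_gen f a b df) as [c [hc e]].
- intros x hx. apply hd. rewrite Rmin_left, Rmax_right in hx; lra.
- intros x hx. rewrite Rmin_left, Rmax_right in hx by lra.
  apply derivable_continuous_pt. exists (df x). apply is_derive_Reals, hd; lra.
- rewrite Rmin_left, Rmax_right in hc by lra.
  assert (0 <= df c) by (apply hp; lra). nra.
Qed.

Lemma Rpower_pos x y : 0 < Rpower x y.
Proof. unfold Rpower; apply exp_pos. Qed.

Lemma comp (f df : R -> R) (T c m : R) : 0 < T -> 0 < c -> -1 < m ->
  (forall s, T <= s -> is_derive f s (df s)) ->
  (forall s, T <= s -> df s >= c * Rpower s m) -> 0 <= f T ->
  forall t, T * Rpower 2 (/(m+1)) <= t -> f t >= c / (2*(m+1)) * Rpower t (m+1).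
Proof.
intros hT hc hm hd hdf hf t ht.
set (e := m + 1). assert (he : 0 < e) by (unfold e; lra).
assert (h2 : 1 <= Rpower 2 (/e)).
{ rewrite <- (Rpower_O 2) by lra. apply Rle_Rpower; [lra|].
  apply Rlt_le, Rinv_0_lt_compat; lra. }
fold e in ht.
assert (hTt : T <= t).
{ assert (T * 1 <= T * Rpower 2 (/e)) by (apply Rmult_le_compat_l; lra). rewrite Rmult_1_r in H. fold e in ht. lra. }
set (w := fun s => f s - c / e * Rpower s e).
assert (hw : w T <= w t).
{ apply (nondecr w (fun s => df s - c / e * (e * Rpower s (e - 1)))); [lra| |].
  - intros s hs. unfold w. apply is_derive_Reals.
    apply (derivable_pt_lim_minus f (fun s => c / e * Rpower s e)).
    + apply is_derive_Reals, hd; lra.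
    + apply (derivable_pt_lim_scal (fun s => Rpower s e)). apply derivable_pt_lim_power; lra.
  - intros s hs. replace (e - 1) with m by (unfold e; ring).
    specialize (hdf s ltac:(lra)).
    replace (c / e * (e * Rpower s m)) with (c * Rpower s m) by (field; lra). lra. }
unfold w in hw.
assert (hTe : Rpower (T * Rpower 2 (/e)) e <= Rpower t e).
{ apply Rle_Rpower_l; [lra|]. split; [|lra]. apply Rmult_lt_0_compat; [lra|apply Rpower_pos]. }
rewrite <- Rpower_mult_distr in hTe by (try lra; apply Rpower_pos).
rewrite Rpower_mult in hTe. rewrite Rinv_l in hTe by lra. rewrite Rpower_1 in hTe by lra.
assert (0 < Rpower T e) by apply Rpower_pos.
assert (c / e * Rpower t e - c / e * Rpower T e >= c / (2 * e) * Rpower t e).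
{ replace (c / e * Rpower t e - c / e * Rpower T e) with (c / e * (Rpower t e - Rpower T e)) by ring.
  replace (c / (2*e) * Rpower t e) with (c / e * (Rpower t e / 2)) by (field; lra).
  apply Rle_ge, Rmult_le_compat_l; [apply Rlt_le, Rdiv_lt_0_compat; lra| lra]. }
lra.
Qed.
Lemma rpow_eq x a : 0 < x -> rpow x a = Rpower x a.
Proof. intros h; unfold rpow; destruct (Rlt_dec 0 x); [reflexivity| lra]. Qed.

Lemma jb_pos t : 0 < jb t.
Proof. unfold jb. apply sqrt_lt_R0. nra. Qed.

Lemma jb_le t : 1 <= t -> jb t <= 2 * t.
Proof.
intros h. unfold jb. rewrite <- (sqrt_square (2*t)) by lra.
apply sqrt_le_1; nra.
Qed.

Lemma jb_neg t al : 1 <= t -> 0 <= al ->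
  rpow (jb t) (- al) >= Rpower 2 (- al) * Rpower t (- al).
Proof.
intros ht hal. rewrite rpow_eq by apply jb_pos.
rewrite Rpower_mult_distr by lra. rewrite !Rpower_Ropp.
apply Rle_ge, Rinv_le_contravar; [apply Rpower_pos|].
apply Rle_Rpower_l; [lra|]. split; [apply jb_pos| apply jb_le; lra].
Qed.

Lemma jb_posM t M : 1 <= t -> 0 <= M ->
  rpow (jb t) M <= Rpower 2 M * Rpower t M.
Proof.
intros ht hM. rewrite rpow_eq by apply jb_pos.
rewrite Rpower_mult_distr by lra.
apply Rle_Rpower_l; [lra|]. split; [apply jb_pos| apply jb_le; lra].
Qed.

Lemma Rpower_mono_base x y e : 0 <= e -> 0 < x -> x <= y -> Rpower x e <= Rpower y e.
Proof. intros. apply Rle_Rpower_l; lra. Qed.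

Lemma step a p q C (H H1 G G1 G2 : R -> R) :
  0 <= a -> 1 < p -> 1 < q -> a * (q - 1) < 1 -> 0 < p + 1 - a * (p * q - 1) -> 0 < C ->
  (forall t, 0 < t -> is_derive H t (H1 t)) ->
  (forall t, 0 < t -> is_derive G t (G1 t)) ->
  (forall t, 0 < t -> is_derive G1 t (G2 t)) ->
  (forall t, 0 <= t ->
     H1 t >= C * rpow (jb t) (- (a * (q - 1))) * rpow (G t) q
     /\ H t >= 0 /\ H1 t >= 0
     /\ G2 t + 2 * G1 t >= C * rpow (jb t) (- (a * (p - 1))) * rpow (H t) p
     /\ G t > 0 /\ G1 t >= 0) ->
  forall k B T, 0 <= k -> 0 < B -> 1 <= T ->
  (forall t, T <= t -> G t >= B * Rpower t k) ->
  exists B' T', 0 < B' /\ 1 <= T' /\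
    forall t, T' <= t -> G t >= B' * Rpower t (p * q * k + (p + 1 - a * (p * q - 1))).
Proof.
intros ha hp hq haq hk1p hC dH dG dG1 hyp k B T hk hB hT hG.
set (al := a * (q - 1)). set (be := a * (p - 1)).
assert (hal : 0 <= al) by (unfold al; nra).
assert (hbe : 0 <= be) by (unfold be; nra).
set (m := k * q - al).
set (c1 := C * Rpower 2 (- al) * Rpower B q).
assert (hc1 : 0 < c1).
{ unfold c1. apply Rmult_lt_0_compat; [apply Rmult_lt_0_compat; [lra|apply Rpower_pos]|apply Rpower_pos]. }
assert (hm : -1 < m) by (unfold m, al in *; nra).
assert (s1 : forall s, T <= s -> H1 s >= c1 * Rpower s m).
{ intros s hs. destruct (hyp s ltac:(lra)) as [h1 [_ [_ [_ [hGs _]]]]].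
  pose proof (hG s hs) as hGB.
  rewrite (rpow_eq (G s)) in h1 by lra. fold al in h1.
  pose proof (jb_neg s al ltac:(lra) hal) as hj.
  assert (hq1 : Rpower (G s) q >= Rpower B q * Rpower s (k * q)).
  { rewrite <- Rpower_mult, Rpower_mult_distr by (try lra; apply Rpower_pos).
    apply Rle_ge, Rpower_mono_base; try lra.
    apply Rmult_lt_0_compat; [lra|apply Rpower_pos]. }
  assert (e : c1 * Rpower s m = C * (Rpower 2 (- al) * Rpower s (- al)) * (Rpower B q * Rpower s (k * q))).
  { unfold c1, m. unfold Rminus. rewrite Rpower_plus. ring. }
  rewrite e.
  assert (0 < Rpower 2 (- al) * Rpower s (- al)) by (apply Rmult_lt_0_compat; apply Rpower_pos).
  assert (0 < Rpower B q * Rpower s (k * q)) by (apply Rmult_lt_0_compat; apply Rpower_pos).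
  apply Rle_ge. eapply Rle_trans; [|apply Rge_le, h1].
  apply Rmult_le_compat; try lra.
  - apply Rmult_le_pos; lra.
  - apply Rmult_le_compat_l; lra. }
set (T2 := T * Rpower 2 (/ (m + 1))).
set (c2 := c1 / (2 * (m + 1))).
assert (hc2 : 0 < c2) by (unfold c2; apply Rdiv_lt_0_compat; lra).
assert (hT2 : T <= T2).
{ unfold T2. assert (1 <= Rpower 2 (/ (m + 1))).
  { apply Rle_trans with (Rpower 2 0); [rewrite Rpower_O; lra|]. apply Rle_Rpower; [lra|].
    apply Rlt_le, Rinv_0_lt_compat; lra. }
  assert (T * 1 <= T * Rpower 2 (/ (m + 1))) by (apply Rmult_le_compat_l; lra). lra. }
assert (s2 : forall s, T2 <= s -> H s >= c2 * Rpower s (m + 1)).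
{ intros s hs. apply (comp H H1 T c1 m); try lra.
  - intros x hx. apply dH; lra.
  - exact s1.
  - destruct (hyp T ltac:(lra)) as [_ [h _]]. lra.
  - exact hs. }
set (r := (m + 1) * p - be).
set (c3 := C * Rpower 2 (- be) * Rpower c2 p).
assert (hc3 : 0 < c3).
{ unfold c3. apply Rmult_lt_0_compat; [apply Rmult_lt_0_compat; [lra|apply Rpower_pos]|apply Rpower_pos]. }
assert (er : r + 1 = p * q * k + (p + 1 - a * (p * q - 1))) by (unfold r, m, al, be; ring).
assert (hk1 : 0 <= p * q * k) by (apply Rmult_le_pos; nra).
assert (s3 : forall s, T2 <= s -> G2 s + 2 * G1 s >= c3 * Rpower s r).
{ intros s hs. destruct (hyp s ltac:(lra)) as [_ [_ [_ [h1 _]]]].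
  pose proof (s2 s hs) as hHs.
  assert (0 < c2 * Rpower s (m + 1)) by (apply Rmult_lt_0_compat; [lra|apply Rpower_pos]).
  rewrite (rpow_eq (H s)) in h1 by lra. fold be in h1.
  pose proof (jb_neg s be ltac:(lra) hbe) as hj.
  assert (hq1 : Rpower (H s) p >= Rpower c2 p * Rpower s ((m + 1) * p)).
  { rewrite <- Rpower_mult, Rpower_mult_distr by (try lra; apply Rpower_pos).
    apply Rle_ge, Rpower_mono_base; lra. }
  assert (e : c3 * Rpower s r = C * (Rpower 2 (- be) * Rpower s (- be)) * (Rpower c2 p * Rpower s ((m + 1) * p))).
  { unfold c3, r. unfold Rminus. rewrite Rpower_plus. ring. }
  rewrite e.
  assert (0 < Rpower 2 (- be) * Rpower s (- be)) by (apply Rmult_lt_0_compat; apply Rpower_pos).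
  assert (0 < Rpower c2 p * Rpower s ((m + 1) * p)) by (apply Rmult_lt_0_compat; apply Rpower_pos).
  apply Rle_ge. eapply Rle_trans; [|apply Rge_le, h1].
  apply Rmult_le_compat; try lra.
  - apply Rmult_le_pos; lra.
  - apply Rmult_le_compat_l; lra. }
set (T3 := T2 * Rpower 2 (/ (r + 1))).
set (c4 := c3 / (2 * (r + 1))).
assert (hr : -1 < r) by lra.
assert (hc4 : 0 < c4) by (unfold c4; apply Rdiv_lt_0_compat; lra).
assert (hT3 : T2 <= T3).
{ unfold T3. assert (1 <= Rpower 2 (/ (r + 1))).
  { apply Rle_trans with (Rpower 2 0); [rewrite Rpower_O; lra|]. apply Rle_Rpower; [lra|].
    apply Rlt_le, Rinv_0_lt_compat; lra. }
  assert (T2 * 1 <= T2 * Rpower 2 (/ (r + 1))) by (apply Rmult_le_compat_l; lra). lra. }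
assert (s4 : forall s, T3 <= s -> G1 s + 2 * G s >= c4 * Rpower s (r + 1)).
{ intros s hs.
  apply (comp (fun s => G1 s + 2 * G s) (fun s => G2 s + 2 * G1 s) T2 c3 r); try lra.
  - intros x hx. apply is_derive_Reals.
    apply (derivable_pt_lim_plus G1 (fun s => 2 * G s)).
    + apply is_derive_Reals, dG1; lra.
    + apply (derivable_pt_lim_scal G). apply is_derive_Reals, dG; lra.
  - exact s3.
  - destruct (hyp T2 ltac:(lra)) as [_ [_ [_ [_ [h1 h2]]]]]. lra.
  - exact hs. }
assert (Gmono : forall x y, 0 < x -> x <= y -> G x <= G y).
{ intros x y hx hxy. apply (nondecr G G1); auto.
  - intros s hs. apply dG; lra.
  - intros s hs. destruct (hyp s ltac:(lra)) as [_ [_ [_ [_ [_ h]]]]]. lra. }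
exists (c4 * Rpower (/ 2) (r + 1) / 3), (T3 + 2). split; [|split].
- apply Rdiv_lt_0_compat; [apply Rmult_lt_0_compat; [lra|apply Rpower_pos]|lra].
- lra.
- intros t ht. rewrite <- er.
  set (L := c4 * Rpower (t - 1) (r + 1) - 2 * G t).
  assert (hw : G (t - 1) - L * (t - 1) <= G t - L * t).
  { apply (nondecr (fun s => G s - L * s) (fun s => G1 s - L * 1)); [lra| |].
    - intros s hs. apply is_derive_Reals.
      apply (derivable_pt_lim_minus G (fun s => L * s)).
      + apply is_derive_Reals, dG; lra.
      + apply (derivable_pt_lim_scal id). apply derivable_pt_lim_id.
    - intros s hs. pose proof (s4 s ltac:(lra)).
      assert (G s <= G t) by (apply Gmono; lra).
      assert (Rpower (t - 1) (r + 1) <= Rpower s (r + 1)) by (apply Rpower_mono_base; lra).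
      unfold L. nra. }
  assert (hGt1 : G (t - 1) > 0) by (destruct (hyp (t - 1) ltac:(lra)) as [_ [_ [_ [_ [h _]]]]]; lra).
  assert (Rpower t (r + 1) * Rpower (/ 2) (r + 1) <= Rpower (t - 1) (r + 1)).
  { rewrite Rpower_mult_distr by lra. apply Rpower_mono_base; lra. }
  unfold L in hw.
  assert (c4 * (Rpower t (r + 1) * Rpower (/ 2) (r + 1)) <= c4 * Rpower (t - 1) (r + 1))
    by (apply Rmult_le_compat_l; lra).
  apply Rle_ge.
  replace (c4 * Rpower (/ 2) (r + 1) / 3 * Rpower t (r + 1))
    with (c4 * (Rpower t (r + 1) * Rpower (/ 2) (r + 1)) / 3) by (field).
  lra.
Qed.

Theorem lemma5p2 (n : nat) (p q eps C : R)
  (H H1 G G1 G2 : R -> R) :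
  (1 <= n)%nat -> 1 < p -> 1 < q ->
  (p + 1) / (p * q - 1) > (INR n - 1) / 2 ->
  (INR n - 1) / 2 * (q - 1) < 1 ->
  0 < eps -> 0 < C ->
  (forall t, 0 < t -> is_derive H t (H1 t)) ->
  (forall t, 0 < t -> is_derive G t (G1 t)) ->
  (forall t, 0 < t -> is_derive G1 t (G2 t)) ->
  cont_Rplus H -> cont_Rplus H1 ->
  cont_Rplus G -> cont_Rplus G1 -> cont_Rplus G2 ->
  (forall t, 0 <= t ->
     H1 t >= C * rpow (jb t) (- ((INR n - 1) / 2 * (q - 1))) * rpow (G t) q
     /\ H t >= 0 /\ H1 t >= 0
     /\ G2 t + 2 * G1 t >= C * rpow (jb t) (- ((INR n - 1) / 2 * (p - 1))) * rpow (H t) p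
     /\ G t >= C * eps /\ G1 t >= 0) ->
  forall M, 0 < M -> exists A T, 0 < A /\ 0 < T /\
    forall t, T <= t -> G t >= A * rpow (jb t) M.
Proof.
intros hn hp hq hpq haq heps hC dH dG dG1 _ _ _ _ _ hyp M hM.
set (a := (INR n - 1) / 2) in *.
assert (ha : 0 <= a).
{ unfold a. apply le_INR in hn. simpl in hn. lra. }
assert (hpq1 : 0 < p * q - 1) by nra.
set (k1 := p + 1 - a * (p * q - 1)).
assert (hk1 : 0 < k1).
{ unfold k1. assert (e : p + 1 = (p + 1) / (p * q - 1) * (p * q - 1)) by (field; lra).
  assert (a * (p * q - 1) < (p + 1) / (p * q - 1) * (p * q - 1))
    by (apply Rmult_lt_compat_r; lra). lra. }
assert (hyp' : forall t, 0 <= t ->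
     H1 t >= C * rpow (jb t) (- (a * (q - 1))) * rpow (G t) q
     /\ H t >= 0 /\ H1 t >= 0
     /\ G2 t + 2 * G1 t >= C * rpow (jb t) (- (a * (p - 1))) * rpow (H t) p
     /\ G t > 0 /\ G1 t >= 0).
{ intros t ht. destruct (hyp t ht) as [h1 [h2 [h3 [h4 [h5 h6]]]]].
  repeat split; auto. assert (0 < C * eps) by nra. lra. }
assert (ind : forall N : nat, exists k B T, INR N * k1 <= k /\ 0 <= k /\ 0 < B /\ 1 <= T /\
   forall t, T <= t -> G t >= B * Rpower t k).
{ induction N as [|N IH].
  - exists 0, (C * eps), 1. simpl. repeat split; try lra; try nra.
    intros t ht. rewrite Rpower_O by lra. destruct (hyp t ltac:(lra)) as [_ [_ [_ [_ [h _]]]]]. lra.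
  - destruct IH as [k [B [T [hk [hk0 [hB [hT hG]]]]]]].
    destruct (step a p q C H H1 G G1 G2 ha hp hq haq hk1 hC dH dG dG1 hyp' k B T hk0 hB hT hG)
      as [B' [T' [hB' [hT' hG']]]].
    exists (p * q * k + k1), B', T'.
    assert (k <= p * q * k) by nra.
    rewrite S_INR. repeat split; try lra; auto. }
destruct (archimed_cor1 (k1 / M) ltac:(apply Rdiv_lt_0_compat; lra)) as [N [hN hN0]].
assert (hINR : 0 < INR N) by (apply lt_0_INR; lia).
assert (hMN : M < INR N * k1).
{ apply Rmult_lt_compat_r with (r := M * INR N) in hN; [|nra].
  replace (/ INR N * (M * INR N)) with M in hN by (field; lra).
  replace (k1 / M * (M * INR N)) with (INR N * k1) in hN by (field; lra). lra. }
destruct (ind N) as [k [B [T [hk [hk0 [hB [hT hG]]]]]]].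
exists (B / Rpower 2 M), T. split; [apply Rdiv_lt_0_compat; [lra|apply Rpower_pos]|split; [lra|]].
intros t ht.
pose proof (hG t ht) as h.
assert (Rpower t M <= Rpower t k) by (apply Rle_Rpower; lra).
pose proof (jb_posM t M ltac:(lra) ltac:(lra)) as hj.
assert (0 < Rpower 2 M) by apply Rpower_pos.
assert (B / Rpower 2 M * rpow (jb t) M <= B / Rpower 2 M * (Rpower 2 M * Rpower t M)).
{ apply Rmult_le_compat_l; [apply Rlt_le, Rdiv_lt_0_compat; lra| lra]. }
replace (B / Rpower 2 M * (Rpower 2 M * Rpower t M)) with (B * Rpower t M) in H3 by (field; lra).
assert (B * Rpower t M <= B * Rpower t k) by (apply Rmult_le_compat_l; lra).
lra.
Qed.
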